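(* Let $S,T\subseteq\mathbb{Z}_{>0}$ be finite with $T\preceq S$, and let $x$ be such that $|T_{<x}|=|S_{\le x}|$. Then $(T\triangleleft S)(j)=T(j)$ for every $j\le|T_{<x}|$.
   Context: For a finite set $S\subseteq\mathbb{Z}_{>0}$, $S(i)$ denotes its $i$th smallest element, $S_{<x}=\{s\in S:s<x\}$, $S_{\le x}=\{s\in S:s\le x\}$. $T\preceq S$ means $|T|\ge|S|$ and $T(i)<S(i)$ for all $i\in[|S|]$. For finite $S,T$, $T\triangleleft S$ is computed by going through $S$ from largest to smallest; each $s$ picks the largest element of $T$ less than $s$ not yet picked (if one exists); $T\triangleleft S$ is the set of picked elements. *)

(* Defs.v *)
From mathcomp Require Import all_boot.
Set Implicit Arguments. Unset Strict Implicit. Unset Printing Implicit Defensive.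

(* A finite set S of positive integers is represented by a duplicate-free
   list of naturals, all positive (the order of the list is irrelevant). *)
Definition posfinset (S : seq nat) : bool := uniq S && all (fun s => 0 < s) S.

(* S(i): the i-th smallest element of S, 1-indexed. *)
Definition elt (S : seq nat) (i : nat) : nat := nth 0 (sort leq S) i.-1.

Definition card_lt (S : seq nat) (x : nat) : nat := count (fun s => s < x) S.
Definition card_le (S : seq nat) (x : nat) : nat := count (fun s => s <= x) S.

Definition preceq (T S : seq nat) : Prop :=
  size S <= size T /\ forall i, 1 <= i <= size S -> elt T i < elt S i.

Definition pick_lt (avail : seq nat) (s : nat) : option nat :=
  match [seq t <- avail | t < s] with
  | [::] => None
  | c => Some (\max_(t <- c) t)
  end.

(* state = (elements of T not yet picked, picked elements) *)
Definition tri_step (st : seq nat * seq nat) (s : nat) : seq nat * seq nat :=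
  match pick_lt st.1 s with
  | Some t => (rem t st.1, t :: st.2)
  | None => st
  end.

Definition tri (T S : seq nat) : seq nat :=
  (foldl tri_step (T, [::]) (rev (sort leq S))).2.

(* Main.v *)
Require Import Defs.
From mathcomp Require Import all_boot.
From mathcomp Require Import zify.

Lemma max_mem (a : nat) c : \max_(u <- a :: c) u \in a :: c.
Proof.
elim: c a => [|b c IH] a; first by rewrite big_cons big_nil maxn0 mem_head.
rewrite big_cons; have := IH b.
set M := \max_(u <- b :: c) u => HM.
case: (leqP a M) => h; last by rewrite mem_head.
by rewrite inE HM orbT.
Qed.

Lemma pick_spec A s : match pick_lt A s with
  | None => forall a, a \in A -> a < s -> False
  | Some t => [/\ t \in A, t < s & forall a, a \in A -> a < s -> a <= t] end.
Proof.
rewrite /pick_lt; case E: [seq t <- A | t < s] => [|a c].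
  move=> b bA bs; have : b \in [seq t <- A | t < s] by rewrite mem_filter bs bA.
  by rewrite E.
have : \max_(u <- a :: c) u \in [seq t <- A | t < s] by rewrite E; exact: max_mem.
rewrite mem_filter => /andP[ms mA].
split=> // b bA bs.
apply: (@leq_bigmax_seq _ (a :: c) predT (fun u => u) b) => //.
by rewrite -E mem_filter bs bA.
Qed.

Lemma tri_perm l st :
  perm_eq ((foldl tri_step st l).1 ++ (foldl tri_step st l).2) (st.1 ++ st.2).
Proof.
elim: l st => [|s l IH] st //=.
apply: perm_trans (IH _) _.
rewrite /tri_step; have := pick_spec st.1 s.
case: (pick_lt st.1 s) => [t [tA _ _]|_] /=; last exact: perm_refl.
rewrite -cat1s perm_catCA cat1s -cat_cons.
by rewrite perm_cat2r perm_sym perm_to_rem.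
Qed.

Lemma tri_count l : sorted (fun a b => b <= a) l -> forall st,
  (forall y, count (fun s => s <= y) l <= count (fun a => a < y) st.1) ->
  forall y, count (fun a => a < y) (foldl tri_step st l).1
            <= count (fun a => a < y) st.1 - count (fun s => s <= y) l.
Proof.
elim: l => [|s l IH] Hsort st Hinv y /=; first by rewrite subn0.
have Hl : all (fun b => b <= s) l.
  by apply: (order_path_min (leT := fun a b => b <= a)) Hsort => a b c h1 h2; exact: leq_trans h2 h1.
have Hsl : sorted (fun a b => b <= a) l := path_sorted Hsort.
have := pick_spec st.1 s; case E: (pick_lt st.1 s) => [t|] spec; last first.
  have := Hinv s; rewrite /= leqnn add1n => /(leq_trans (ltn0Sn _)).
  by rewrite -has_count => /hasP[a aA aS]; case: (spec a aA aS).
case: spec => tA ts tmax.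
have -> : tri_step st s = (rem t st.1, t :: st.2) by rewrite /tri_step E.
have Hinv' : forall y, count (fun s => s <= y) l <= count (fun a => a < y) (rem t st.1).
  move=> z; rewrite count_rem tA /=.
  case: (ltnP t z) => htz /=.
    case: (leqP z s) => hzs.
      have -> : count (fun a => a < z) st.1 = count (fun a => a < s) st.1.
        apply: eq_in_count => a aA /=; apply/idP/idP => h.
          exact: leq_trans h hzs.
        exact: leq_ltn_trans (tmax a aA h) htz.
      have := Hinv s; rewrite /= leqnn.
      have -> : count (fun s0 => s0 <= s) l = size l by apply/eqP; rewrite -all_count.
      move: (count_size (fun s0 => s0 <= z) l).
      lia.
    have := Hinv z; rewrite /= (ltnW hzs); lia.
  have := Hinv z; rewrite /=.
  have -> : (s <= z) = false by apply/negbTE; rewrite -ltnNge; exact: leq_ltn_trans htz ts.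
  lia.
have IH1 := IH Hsl (rem t st.1, t :: st.2) Hinv' y; apply: leq_trans IH1 _ => /=.
rewrite count_rem tA /=.
case: (ltnP t y) => hty /=.
  case: (s <= y); lia.
have -> : (s <= y) = false by apply/negbTE; rewrite -ltnNge; exact: leq_ltn_trans hty ts.
lia.
Qed.

Lemma srt_nth (s : seq nat) i j : sorted leq s -> i <= j -> j < size s ->
  nth 0 s i <= nth 0 s j.
Proof.
move=> hs hij hj.
apply: (sorted_leq_nth leq_trans leqnn 0 hs) => //.
by rewrite inE; exact: leq_ltn_trans hij hj.
Qed.

Lemma init_inv S T y : preceq T S ->
  count (fun s => s <= y) S <= count (fun a => a < y) T.
Proof.
case=> hsz hlt.
rewrite -(count_sort leq) -[count _ T](count_sort leq).
set s := sort leq S; set t := sort leq T.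
have hs : sorted leq s by exact: (sort_sorted leq_total S).
have szs : size s = size S by rewrite size_sort.
have szt : size t = size T by rewrite size_sort.
have iS := count_size (fun s0 => s0 <= y) s.
case Ei: (count (fun s0 => s0 <= y) s) iS => [|i'] iS //.
have Hsi : nth 0 s i' <= y.
  rewrite leqNgt; apply/negP => hy.
  have : count (fun s0 => s0 <= y) s <= i'.
    rewrite -(cat_take_drop i' s) count_cat.
    have -> : count (fun s0 => s0 <= y) (drop i' s) = 0.
      apply/eqP; rewrite -leqn0 leqNgt -has_count; apply/hasPn => z zd.
      case/(nthP 0): zd => m hm <-; rewrite nth_drop.
      rewrite size_drop in hm.
      rewrite -ltnNge; apply: leq_trans hy _; apply: srt_nth => //; clear z; clearbody s t; have hm2 : m < size s - i' := hm; lia.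
    have := count_size (fun s0 => s0 <= y) (take i' s); rewrite size_take; case: ltnP => ? ; lia.
  move=> h; have := leq_trans (eq_leq (esym Ei)) h; by rewrite ltnn.
rewrite -(cat_take_drop i'.+1 t) count_cat; apply: leq_trans (leq_addr _ _).
have sztk : size (take i'.+1 t) = i'.+1 by rewrite size_takel //; clearbody s t; lia.
have : all (fun a => a < y) (take i'.+1 t).
  apply/(all_nthP 0) => m; rewrite sztk => hm.
  rewrite nth_take //.
  have := hlt m.+1; rewrite /elt -/s -/t /= => h.
  have h2 := h (ltac:(lia)).
  apply: leq_trans h2 _; apply: leq_trans _ Hsi; apply: srt_nth => //; lia.
by rewrite all_count sztk => /eqP ->.
Qed.

Lemma sort_split (s : seq nat) x :
  sort leq s = sort leq [seq a <- s | a < x] ++ sort leq [seq a <- s | ~~ (a < x)].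
Proof.
apply: (sorted_eq leq_trans anti_leq); first exact: (sort_sorted leq_total).
  rewrite (sorted_pairwise leq_trans) pairwise_cat -!(sorted_pairwise leq_trans).
  rewrite !(sort_sorted leq_total) !andbT.
  apply/allrelP => a b; rewrite !mem_sort !mem_filter => /andP[ha _] /andP[hb _].
  rewrite -ltnNge in hb; exact: ltnW (leq_trans ha hb).
rewrite perm_sort -(perm_filterC (fun a => a < x) s).
by apply: perm_cat; rewrite perm_sym perm_sort.
Qed.

Theorem lemma4p9 (S T : seq nat) (x : nat) :
  posfinset S -> posfinset T -> preceq T S ->
  card_lt T x = card_le S x ->
  forall j, 1 <= j <= card_lt T x -> elt (tri T S) j = elt T j.
Proof.
move=> pS pT hpre hk j hj.
set l := rev (sort leq S).
have hl : sorted (fun a b => b <= a) l.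
  by rewrite /l rev_sorted; exact: (sort_sorted leq_total).
have hinv : forall y : nat, count (fun s => s <= y) l <= count (fun a => a < y) (T, [::] : seq nat).1.
  by move=> y; rewrite /= /l count_rev count_sort; exact: init_inv.
have hc := @tri_count l hl (T, [::]) hinv x.
rewrite /= /l count_rev count_sort in hc.
have hperm := tri_perm l (T, [::]).
rewrite /tri -/l.
set A' := (foldl tri_step (T, [::]) l).1 in hc hperm *.
set P := (foldl tri_step (T, [::]) l).2 in hperm *.
rewrite /card_lt /card_le in hk hj.
have hA0 : count (fun a => a < x) A' = 0 by rewrite hk subnn in hc; lia.
have uT : uniq T by case/andP: pT.
have uP : uniq P.
  by have := perm_uniq hperm; rewrite /= cats0 uT cat_uniq => /and3P[].
have hPL : perm_eq [seq a <- P | a < x] [seq a <- T | a < x].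
  apply: uniq_perm; rewrite ?filter_uniq // => a; rewrite !mem_filter.
  case: (ltnP a x) => //= hax.
  have hm := perm_mem hperm a; rewrite /= cats0 mem_cat in hm.
  rewrite -hm; case hA: (a \in A') => //=.
  have : 0 < count (fun a => a < x) A' by rewrite -has_count; apply/hasP; exists a.
  by rewrite hA0.
rewrite /elt (sort_split P x) (sort_split T x).
have hsz : size (sort leq [seq a <- T | a < x]) = count (fun a => a < x) T.
  by rewrite size_sort size_filter.
rewrite ((perm_sortP leq_total leq_trans anti_leq _ _) hPL).
rewrite !nth_cat hsz.
by have -> : j.-1 < count (fun a => a < x) T by lia.
Qed.
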